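(* Let $\{d_i,\mathcal F_i\}_{i=1}^n$ be a martingale difference sequence. Let $v_{i-1}$ be $\mathcal F_{i-1}$-measurable random variables such that $\mathbb E[\exp(\lambda d_i)\mid\mathcal F_{i-1}]\le\exp\!\left(\frac{\lambda^2}{2}v_{i-1}\right)$ for all $\lambda>0$ and all $i\in[n]$. Define $S_n=\sum_{i=1}^n d_i$ and $V_n=\sum_{i=1}^n v_{i-1}$. Let $\delta\in(0,1)$ and suppose there are positive values $R(\delta)$ and $\alpha_1,\dots,\alpha_n$ such that $\Pr\!\left[V_n\le\sum_{i=1}^n\alpha_id_i+R(\delta)\right]\ge1-\delta$. Then for every $x>0$, \[ \Pr[S_n\ge x]\le\delta+\exp\!\left(-\frac{x^2}{4\left(\max_{i\in[n]}\alpha_i\right)x+8R(\delta)}\right). \]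
   Context: $[n]=\{1,\dots,n\}$. *)

(* Defs.v *)
From HB Require Import structures.
From mathcomp Require Import all_boot all_order all_algebra.
From mathcomp Require Import all_classical all_reals all_analysis.
Set Implicit Arguments. Unset Strict Implicit. Unset Printing Implicit Defensive.
Import Order.TTheory GRing.Theory Num.Theory.
Local Open Scope classical_set_scope.
Local Open Scope ring_scope.

Section Defs.
Context (d : measure_display) (T : measurableType d) (R : realType).

Definition filtration (F : nat -> set (set T)) : Prop :=
  (forall i, sigma_algebra setT (F i)) /\
  (forall i A, F i A -> measurable A) /\
  (forall i j A, (i <= j)%N -> F i A -> F j A).

Definition Gmeasurable (G : set (set T)) (f : T -> R) : Prop :=
  forall B : set R, measurable B -> G (f @^-1` B).

Definition cond_exp_version (P : probability T R) (G : set (set T))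
    (X g : T -> R) : Prop :=
  Gmeasurable G g /\
  (forall A, G A ->
     (\int[P]_(x in A) (g x)%:E = \int[P]_(x in A) (X x)%:E)%E).

Definition mds (P : probability T R) (F : nat -> set (set T))
    (dd : nat -> T -> R) (n : nat) : Prop :=
  forall i, (1 <= i <= n)%N ->
    [/\ Gmeasurable (F i) (dd i),
        P.-integrable setT (EFin \o dd i) &
        exists g, cond_exp_version P (F i.-1) (dd i) g /\
                  {ae P, forall x, g x = 0}].

End Defs.

(* Main.v *)
Require Import Defs.
From HB Require Import structures.
From mathcomp Require Import all_boot all_order all_algebra.
From mathcomp Require Import all_classical all_reals all_analysis.
From mathcomp Require Import measurable_realfun.
From mathcomp Require Import ring lra.
Import Order.TTheory GRing.Theory Num.Theory.
Local Open Scope classical_set_scope.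
Local Open Scope ring_scope.
Section tools.
Context {d : measure_display} {T : measurableType d} {R : realType}.

Lemma GmeasP (G : set (set T)) (f : T -> R) : sigma_algebra setT G ->
  Gmeasurable G f <-> measurable_fun setT (f : g_sigma_algebraType G -> R).
Proof.
move=> sG; split.
- move=> Gf _ B mB; rewrite setTI measurable_g_measurableTypeE //; exact: Gf.
- move=> mf B mB; have := mf measurableT B mB.
  by rewrite setTI measurable_g_measurableTypeE.
Qed.

Lemma Gmeas_meas (G : set (set T)) (f : T -> R) :
  (forall A, G A -> measurable A) -> Gmeasurable G f -> measurable_fun setT f.
Proof. by move=> GA Gf _ B mB; rewrite setTI; apply: GA; exact: Gf. Qed.

Lemma Gmeas_mono (G G' : set (set T)) (f : T -> R) :
  (forall A, G A -> G' A) -> Gmeasurable G f -> Gmeasurable G' f.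
Proof. by move=> GG Gf B mB; apply: GG; exact: Gf. Qed.

Lemma GmeasD (G : set (set T)) (f g : T -> R) : sigma_algebra setT G ->
  Gmeasurable G f -> Gmeasurable G g -> Gmeasurable G (f \+ g).
Proof.
move=> sG /(GmeasP _ _ sG) mf /(GmeasP _ _ sG) mg; apply/(GmeasP _ _ sG).
exact: measurable_realfun.measurable_funD.
Qed.

Lemma GmeasM (G : set (set T)) (f g : T -> R) : sigma_algebra setT G ->
  Gmeasurable G f -> Gmeasurable G g -> Gmeasurable G (f \* g).
Proof.
move=> sG /(GmeasP _ _ sG) mf /(GmeasP _ _ sG) mg; apply/(GmeasP _ _ sG).
exact: measurable_realfun.measurable_funM.
Qed.

Lemma Gmeas_cst (G : set (set T)) (r : R) : sigma_algebra setT G ->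
  Gmeasurable G (fun=> r).
Proof.
move=> sG; apply/(GmeasP _ _ sG); exact: measurable_cst.
Qed.

Lemma Gmeas_exp (G : set (set T)) (f : T -> R) : sigma_algebra setT G ->
  Gmeasurable G f -> Gmeasurable G (fun x => expR (f x)).
Proof.
move=> sG /(GmeasP _ _ sG) mf; apply/(GmeasP _ _ sG).
have h := measurableT_comp (@measurable_realfun.measurable_expR R) mf; exact: h.
Qed.

Lemma Gmeas_sum (G : set (set T)) (I : Type) (s : seq I) (h : I -> T -> R) :
  sigma_algebra setT G -> (forall i, Gmeasurable G (h i)) ->
  Gmeasurable G (fun x => \sum_(i <- s) h i x).
Proof.
move=> sG mh; apply/(GmeasP _ _ sG); apply: measurable_sum => i.
exact/(GmeasP _ _ sG).
Qed.

End tools.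
Section t2.
Context {d : measure_display} {T : measurableType d} {R : realType}.
Lemma le_int_signed (mu : {measure set T -> \bar R}) (A : set T) (f h : T -> R) :
  measurable A -> measurable_fun A f -> measurable_fun A h ->
  (forall x, A x -> 0 <= h x) ->
  {ae mu, forall x, A x -> f x <= h x} ->
  (\int[mu]_(x in A) (f x)%:E <= \int[mu]_(x in A) (h x)%:E)%E.
Proof.
move=> mA mf mh h0 fh.
rewrite integralE.
apply: (@le_trans _ _ (\int[mu]_(x in A) ((EFin \o f)^\+ x))%E).
  rewrite -[leRHS]sube0; apply: leeB => //.
  by apply: integral_ge0 => x _; exact: funeneg_ge0.
apply: ae_ge0_le_integral => //.
- by apply: measurable_realfun.measurable_funepos; exact/measurable_realfun.measurable_EFinP.
- exact/measurable_realfun.measurable_EFinP.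
move: fh; apply: filterS => x fhx Ax; rewrite funeposE /= -EFin_max lee_fin.
by rewrite ge_max fhx// h0.
Qed.
End t2.
Section t4.
Context {d : measure_display} {T : measurableType d} {R : realType}.

Lemma int_indic_mul (mu : {measure set T -> \bar R}) (A : set T) (Z : T -> R) :
  (\int[mu]_x (\1_A x * Z x)%:E = \int[mu]_(x in A) (Z x)%:E)%E.
Proof.
rewrite [RHS]integral_mkcond; apply: eq_integral => x _.
by rewrite patchE indicE; case: ifPn => _; rewrite ?mul1r ?mul0r.
Qed.

Lemma approx_mul_int (mu : {measure set T -> \bar R}) (Y Z : T -> R) n :
  measurable_fun setT Z -> (forall x, 0 <= Z x) ->
  (forall k, measurable (dyadic_approx setT (EFin \o Y) n k)) ->
  measurable (integer_approx setT (EFin \o Y) n) ->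
  (\int[mu]_x (approx setT (EFin \o Y) n x * Z x)%:E =
   \sum_(k < n * 2 ^ n) (k%:R * 2 ^- n)%:E *
       \int[mu]_(x in dyadic_approx setT (EFin \o Y) n k) (Z x)%:E
   + n%:R%:E * \int[mu]_(x in integer_approx setT (EFin \o Y) n) (Z x)%:E)%E.
Proof.
move=> mZ Z0 mA mB.
have mZ' : measurable_fun setT (EFin \o Z) by exact/measurable_realfun.measurable_EFinP.
have mIZ (S : set T) : measurable S -> measurable_fun setT (fun x => (\1_S x * Z x)%:E).
  move=> mS; apply/measurable_realfun.measurable_EFinP.
  apply: measurable_realfun.measurable_funM => //.
have IZ0 (S : set T) x : (0 <= (\1_S x * Z x)%:E)%E.
  by rewrite lee_fin mulr_ge0.
set A := dyadic_approx setT (EFin \o Y) n.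
set B := integer_approx setT (EFin \o Y) n.
have E x : (approx setT (EFin \o Y) n x * Z x)%:E =
  (\sum_(k < n * 2 ^ n) (k%:R * 2 ^- n)%:E * (\1_(A k) x * Z x)%R%:E
   + n%:R%:E * (\1_B x * Z x)%R%:E)%E.
  rewrite /approx mulrDl mulr_suml EFinD -sumEFin; congr (_ + _)%E.
  - by apply: eq_bigr => k _; rewrite -EFinM mulrA.
  - by rewrite -EFinM mulrA.
under eq_integral => x _ do rewrite E.
rewrite ge0_integralD //; last 4 first.
- by move=> x _; apply: sume_ge0 => k _; apply: mule_ge0.
- by apply: emeasurable_sum => k; apply: measurable_funeM; exact: mIZ.
- by move=> x _; apply: mule_ge0.
- by apply: measurable_funeM; exact: mIZ.
rewrite ge0_integral_sum //; last 2 first.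
- by move=> k; apply: measurable_funeM; exact: mIZ.
- by move=> k x _; apply: mule_ge0.
congr (_ + _)%E.
- apply: eq_bigr => k _.
  transitivity ((k%:R * 2 ^- n)%:E * \int[mu]_x (\1_(A k) x * Z x)%:E)%E.
    apply: ge0_integralZl_EFin => //; exact: mIZ.
  by congr (_ * _)%E; exact: int_indic_mul.
- transitivity (n%:R%:E * \int[mu]_x (\1_B x * Z x)%:E)%E.
    apply: ge0_integralZl_EFin => //; exact: mIZ.
  by congr (_ * _)%E; exact: int_indic_mul.
Qed.


Lemma pullout (mu : {measure set T -> \bar R}) (G : set (set T)) (X H Y : T -> R) :
  sigma_algebra setT G -> (forall A, G A -> measurable A) ->
  measurable_fun setT X -> measurable_fun setT H ->
  (forall x, 0 <= X x) -> (forall x, 0 <= H x) -> (forall x, 0 <= Y x) ->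
  Gmeasurable G Y ->
  (forall A, G A -> \int[mu]_(x in A) (X x)%:E <= \int[mu]_(x in A) (H x)%:E)%E ->
  (\int[mu]_x (Y x * X x)%:E <= \int[mu]_x (Y x * H x)%:E)%E.
Proof.
move=> sG GA mX mH X0 H0 Y0 GY XH.
have mY : measurable_fun setT Y.
  by move=> _ B mB; rewrite setTI; apply: GA; exact: GY.
have mEY : measurable_fun setT (EFin \o Y) by exact/measurable_EFinP.
have G0 : G set0 by case: sG.
have Gset n k : G (dyadic_approx setT (EFin \o Y) n k).
  rewrite /dyadic_approx; case: ifPn => _ //.
  have -> : setT `&` [set x | (EFin \o Y) x \in EFin @` [set` dyadic_itv R n k]]
      = Y @^-1` [set` dyadic_itv R n k].
    apply/seteqP; split => x /=.
    - by move=> [_]; rewrite inE => -[r rI [<-]].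
    - by move=> Ix; split => //; rewrite inE; exists (Y x).
  by apply: GY; exact: measurable_itv.
have GsetB n : G (integer_approx setT (EFin \o Y) n).
  have -> : integer_approx setT (EFin \o Y) n = Y @^-1` `[n%:R, +oo[.
    apply/seteqP; split => x /=.
    - by move=> [_ h]; rewrite in_itv /= andbT -lee_fin.
    - by rewrite in_itv /= andbT => h; split => //=; rewrite -lee_fin in h.
  by apply: GY; exact: measurable_itv.
set a := approx setT (EFin \o Y).
have a0 n x : 0 <= a n x.
  rewrite /a /approx; apply: addr_ge0; last by rewrite mulr_ge0.
  by apply: sumr_ge0 => k _; rewrite mulr_ge0.
have ma n : measurable_fun setT (a n).
  rewrite /a /approx; apply: measurable_funD.
    apply: measurable_sum => k; apply: measurable_funM => //.
    by apply: measurable_indic; apply: GA.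
  by apply: measurable_funM => //; apply: measurable_indic; apply: GA.
have le_n n : (\int[mu]_x (a n x * X x)%:E <= \int[mu]_x (a n x * H x)%:E)%E.
  rewrite /a !approx_mul_int //; last 4 first.
  - by move=> k; apply: GA.
  - by apply: GA.
  - by move=> k; apply: GA.
  - by apply: GA.
  apply: leeD.
    apply: lee_sum => k _; apply: lee_pmul => //;
      try (by apply: integral_ge0 => x _; exact: X0); try exact: XH.
  apply: lee_pmul => //;
    try (by apply: integral_ge0 => x _; exact: X0); try exact: XH.
have conv (Z : T -> R) : measurable_fun setT Z -> (forall x, 0 <= Z x) ->
    (\int[mu]_x (Y x * Z x)%:E = limn (fun n => \int[mu]_x (a n x * Z x)%:E))%E.
  move=> mZ Z0.
  have h1 n : measurable_fun setT (fun x => (a n x * Z x)%:E).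
    apply/measurable_EFinP; exact: measurable_funM.
  have h2 n x : setT x -> (0 <= (a n x * Z x)%:E)%E.
    by move=> _; rewrite lee_fin mulr_ge0.
  have h3 x : setT x -> {homo (fun n => (a n x * Z x)%:E) : n m / (n <= m)%N >-> (n <= m)%E}.
    move=> _ m n mn; rewrite lee_fin ler_wpM2r //.
    by have /lefP := nd_approx setT (EFin \o Y) mn; apply.
  rewrite -(@monotone_convergence _ _ _ mu setT measurableT (fun n x => (a n x * Z x)%:E) h1 h2 h3).
  apply: eq_integral => x _; apply/esym/cvg_lim => //.
  apply: cvg_EFin; first by apply: nearW.
  apply: cvgMr_tmp.
  have := @cvg_approx _ T R setT (EFin \o Y) x (fun x _ => Y0 x) I (ltry _); exact.
have ndint (Z : T -> R) : measurable_fun setT Z -> (forall x, 0 <= Z x) ->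
    cvgn (fun n => \int[mu]_x (a n x * Z x)%:E)%E.
  move=> mZ Z0; apply: ereal_nondecreasing_is_cvgn => m n mn.
  apply: ge0_le_integral => //.
  - by move=> x _; rewrite lee_fin mulr_ge0.
  - apply/measurable_EFinP; exact: measurable_funM.
  - apply/measurable_EFinP; exact: measurable_funM.
  - move=> x _; rewrite lee_fin ler_wpM2r //.
    by have /lefP := nd_approx setT (EFin \o Y) mn; apply.
rewrite (conv X) // (conv H) //.
apply: lee_lim; [exact: ndint | exact: ndint | exact: nearW].
Qed.

End t4.
Section t7.
Context {d : measure_display} {T : measurableType d} {R : realType}.

Lemma v_nonneg (P : probability T R) (G : set (set T)) (dI v g g0 : T -> R) (lam : R) :
  sigma_algebra setT G -> (forall A, G A -> measurable A) -> 0 < lam ->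
  P.-integrable setT (EFin \o dI) -> Gmeasurable G v ->
  cond_exp_version P G dI g0 -> {ae P, forall x, g0 x = 0} ->
  cond_exp_version P G (fun w => expR (lam * dI w)) g ->
  {ae P, forall w, g w <= expR (lam ^+ 2 / 2 * v w)} ->
  {ae P, forall w, 0 <= v w}.
Proof.
move=> sG GA lam0 idI Gv [Gg0 g0E] g00 [Gg gE] gle.
set c := lam ^+ 2 / 2.
have c0 : 0 < c by rewrite /c divr_gt0 // exprn_gt0.
set A := [set w | v w < 0].
have GAA : G A.
  have -> : A = v @^-1` `]-oo, 0[ by apply/seteqP; split => x /=; rewrite in_itv.
  by apply: Gv; exact: measurable_itv.
have mA : measurable A := GA _ GAA.
have mdI : measurable_fun setT dI.
  by case/integrableP: idI => /measurable_EFinP.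
have mv : measurable_fun setT v := Gmeas_meas _ _ GA Gv.
have mg : measurable_fun setT g := Gmeas_meas _ _ GA Gg.
have mg0 : measurable_fun setT g0 := Gmeas_meas _ _ GA Gg0.
have mexp : measurable_fun setT (fun w => expR (c * v w)).
  apply: (measurableT_comp (@measurable_expR R)); exact: measurable_funM.
have mexp2 : measurable_fun setT (fun w => expR (lam * dI w)).
  apply: (measurableT_comp (@measurable_expR R)); exact: measurable_funM.
have h1 : (\int[P]_(x in A) (dI x)%:E = 0)%E.
  rewrite -g0E //.
  rewrite (ae_eq_integral (cst 0)) //; first by rewrite integral0.
  - apply/measurable_EFinP; exact: measurable_funS mg0.
  - move: g00; apply: filterS => x h _; by rewrite /= h.
have idIA : P.-integrable A (EFin \o dI) by apply: integrableS idI.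
have h2 : (\int[P]_(x in A) (1 + lam * dI x)%:E = P A)%E.
  under eq_integral do rewrite EFinD.
  rewrite integralD //.
  - rewrite integral_cst // mul1e.
    under eq_integral do rewrite EFinM.
    by rewrite integralZl // h1 mule0 adde0.
  - exact: finite_measure_integrable_cst.
  - under eq_fun do rewrite EFinM; exact: integrableZl.
have h3 : (P A <= \int[P]_(x in A) (expR (c * v x))%:E)%E.
  rewrite -h2.
  apply: (@le_trans _ _ (\int[P]_(x in A) (expR (lam * dI x))%:E)%E).
    apply: le_int_signed.
    - exact: mA.
    - apply: measurable_funS (measurable_funD (measurable_cst _) (measurable_funM (measurable_cst _) mdI)) => //.
    - exact: measurable_funS mexp2.
    - by move=> x _; exact: expR_ge0.
    - by apply: aeW => x _; exact: expR_ge1Dx.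
  rewrite -gE //.
  apply: le_int_signed.
  - exact: mA.
  - exact: measurable_funS mg.
  - exact: measurable_funS mexp.
  - by move=> x _; exact: expR_ge0.
  - by move: gle; apply: filterS => x h _.
have iexpA : P.-integrable A (EFin \o (fun x => expR (c * v x))).
  apply: (@le_integrable _ _ _ _ _ mA _ (EFin \o cst 1)).
  - apply/measurable_EFinP; exact: measurable_funS mexp.
  - move=> x Ax /=; rewrite lee_fin ger0_norm ?expR_ge0 // normr1.
    by rewrite expR_le1 ltW // pmulr_rlt0.
  - exact: finite_measure_integrable_cst.
have h4 : (\int[P]_(x in A) (1 - expR (c * v x))%:E <= 0)%E.
  under eq_integral do rewrite EFinB.
  rewrite integralB_EFin //; last exact: finite_measure_integrable_cst.
  by rewrite integral_cst // mul1e sube_le0.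
have h5 : ae_eq P A (EFin \o (fun x => 1 - expR (c * v x))) (cst 0%E).
  have mf : measurable_fun A (EFin \o (fun x => 1 - expR (c * v x))).
    apply/measurable_EFinP; apply: measurable_funB => //.
    exact: measurable_funS mexp.
  apply/(ae_eq_integral_abs P mA mf).
  apply/eqP; rewrite eq_le; apply/andP; split; last first.
    by apply: integral_ge0 => x _; exact: abse_ge0.
  apply: (le_trans _ h4); rewrite le_eqVlt; apply/orP; left; apply/eqP.
  apply: eq_integral => x; rewrite inE /= => Ax; rewrite ger0_norm // subr_ge0.
  by rewrite expR_le1 ltW // pmulr_rlt0.
move: h5; apply: filterS => x /= h.
rewrite leNgt; apply/negP => vx.
have := h vx; move=> [] /eqP; rewrite subr_eq0 => /eqP h1'.
by move: (expR_lt1 (c * v x)); rewrite -h1' ltxx pmulr_rlt0 // vx.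
Qed.
End t7.

Section t8.
Context {d : measure_display} {T : measurableType d} {R : realType}.

Lemma Gmeas_sum_in (G : set (set T)) (I : eqType) (s : seq I) (h : I -> T -> R) :
  sigma_algebra setT G -> (forall i, i \in s -> Gmeasurable G (h i)) ->
  Gmeasurable G (fun x => \sum_(i <- s) h i x).
Proof.
move=> sG; elim: s => [|a s IH] hh.
  rewrite (_ : (fun x => \sum_(i <- [::]) h i x) = fun=> 0); last first.
    by apply/funext => x; rewrite big_nil.
  exact: Gmeas_cst.
rewrite (_ : (fun x => \sum_(i <- a :: s) h i x) =
   (h a) \+ (fun x => \sum_(i <- s) h i x)); last first.
  by apply/funext => x; rewrite big_cons.
apply: GmeasD => //; first by apply: hh; rewrite mem_head.
by apply: IH => i hi; apply: hh; rewrite in_cons hi orbT.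
Qed.

End t8.

Theorem lemmaC3 (d : measure_display) (T : measurableType d) (R : realType)
  (P : probability T R) (F : nat -> set (set T)) (n : nat)
  (dd : nat -> T -> R) (v : nat -> T -> R)
  (delta Rd : R) (alpha : nat -> R) :
  filtration F ->
  mds P F dd n ->
  (forall i, (1 <= i <= n)%N -> Gmeasurable (F i.-1) (v i.-1)) ->
  (forall lam : R, 0 < lam -> forall i, (1 <= i <= n)%N ->
     exists g, cond_exp_version P (F i.-1) (fun w => expR (lam * dd i w)) g /\
       {ae P, forall w, g w <= expR (lam ^+ 2 / 2 * v i.-1 w)}) ->
  0 < delta < 1 ->
  0 < Rd ->
  (forall i, (1 <= i <= n)%N -> 0 < alpha i) ->
  (P [set w | (\sum_(1 <= i < n.+1) v i.-1 w
              <= \sum_(1 <= i < n.+1) alpha i * dd i w + Rd)%R]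
     >= (1 - delta)%:E)%E ->
  forall x : R, 0 < x ->
  (P [set w | (\sum_(1 <= i < n.+1) dd i w >= x)%R]
     <= (delta + expR (- (x ^+ 2 / (4 * (\big[Num.max/0]_(1 <= i < n.+1) alpha i) * x
                                    + 8 * Rd))))%:E)%E.
Proof.
move=> [Fs [Fm Fmono]] hmds hv hmgf /andP[delta0 delta1] Rd0 alpha0 hG x x0.
set Amax := \big[Num.max/0]_(1 <= i < n.+1) alpha i.
have Amax0 : 0 <= Amax.
  rewrite /Amax; elim/big_rec: _ => // i y _ y0.
  by rewrite le_max y0 orbT.
have alphaA i : (1 <= i <= n)%N -> alpha i <= Amax.
  by move=> hi; apply: (le_bigmax_seq _ i) => //; rewrite mem_index_iota ltnS.
set D := 2 * Amax * x + 4 * Rd.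
have D0 : 0 < D by rewrite /D; apply: ltr_wpDl; [rewrite mulr_ge0 // ?mulr_ge0 // ltW | rewrite mulr_gt0].
set lam := x / D.
have lam0 : 0 < lam by rewrite /lam divr_gt0.
set c := 2 * lam ^+ 2.
have c0 : 0 < c by rewrite /c mulr_gt0 // exprn_gt0.
set lami := fun i => lam + c * alpha i.
have lami0 i : (1 <= i <= n)%N -> 0 < lami i.
  by move=> hi; rewrite /lami ltr_wpDr // mulr_ge0 // ltW // alpha0.
have lamA : 2 * lam * Amax <= 1.
  have -> : 2 * lam * Amax = (2 * Amax * x) / D by rewrite /lam; field; rewrite gt_eqF.
  by rewrite ler_pdivrMr // mul1r /D lerDl mulr_ge0 // ltW.
have lamic i : (1 <= i <= n)%N -> lami i ^+ 2 / 2 <= c.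
  move=> hi; have l0 := lami0 i hi; have aA := alphaA i hi.
  have : lami i <= 2 * lam.
    rewrite /lami /c.
    have : c * alpha i <= c * Amax by rewrite ler_wpM2l // ltW.
    rewrite /c => h; nra.
  rewrite /c => h; nra.
have vnn i : (1 <= i <= n)%N -> {ae P, forall w, 0 <= v i.-1 w}.
  move=> hi; have [Gd id [g0 [cg0 g00]]] := hmds i hi.
  have [g [cg gle]] := hmgf 1 ltr01 i hi.
  apply: (@v_nonneg _ _ _ P (F i.-1) (dd i) (v i.-1) g g0 1) => //.
  - exact: Fm.
  - exact: hv.
have Gdd i k : (1 <= i <= n)%N -> (i <= k)%N -> Gmeasurable (F k) (dd i).
  move=> hi ik; apply: (@Gmeas_mono _ _ _ (F i)); first by move=> A; apply: Fmono.
  by case: (hmds i hi).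
have Gv i k : (1 <= i <= n)%N -> (i <= k.+1)%N -> Gmeasurable (F k) (v i.-1).
  move=> hi ik; apply: (@Gmeas_mono _ _ _ (F i.-1)); last exact: hv.
  by move=> A; apply: Fmono; rewrite -ltnS prednK //; case/andP: hi.
set Z := fun k w => \sum_(1 <= i < k.+1) (lami i * dd i w - c * v i.-1 w).
have GZ k : (k <= n)%N -> Gmeasurable (F k) (Z k).
  move=> kn; apply: Gmeas_sum_in => // i; rewrite mem_index_iota ltnS => /andP[i1 ik].
  have hi : (1 <= i <= n)%N by rewrite i1 (leq_trans ik kn).
  apply/(GmeasP _ _ (Fs k)); apply: measurable_funB.
  - apply: measurable_funM => //; apply/(GmeasP _ _ (Fs k)); exact: Gdd.
  - apply: measurable_funM => //; apply/(GmeasP _ _ (Fs k)); apply: Gv => //.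
    exact: leqW.
have Mint k : (k <= n)%N -> (\int[P]_w (expR (Z k w))%:E <= 1)%E.
  elim: k => [_|k IH kn].
    under eq_integral do rewrite /Z big_geq // expR0.
    by rewrite integral_cst // mul1e; apply: probability_le1.
  have hk : (1 <= k.+1 <= n)%N by rewrite kn.
  have [g [[Gg gE] gle]] := hmgf (lami k.+1) (lami0 _ hk) k.+1 hk.
  have vk := vnn k.+1 hk.
  set Y := fun w => expR (Z k w - c * v k w).
  set X := fun w => expR (lami k.+1 * dd k.+1 w).
  set H := fun w => expR (c * v k w).
  have eq1 w : expR (Z k.+1 w) = Y w * X w.
    rewrite /Y /X -expRD /Z big_nat_recr //=; congr expR.
    rewrite -/(Z k w); ring.
  have eq2 w : Y w * H w = expR (Z k w).
    by rewrite /Y /H -expRD subrK.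
  under eq_integral do rewrite eq1.
  apply: le_trans (IH (ltnW kn)).
  apply: le_trans (@pullout _ _ _ P (F k) X H Y _ _ _ _ _ _ _ _ _) _.
  - exact: Fs.
  - exact: Fm.
  - apply: (measurableT_comp (@measurable_expR R)); apply: measurable_funM => //.
    apply: (Gmeas_meas _ _ (Fm k.+1)); exact: Gdd.
  - apply: (measurableT_comp (@measurable_expR R)); apply: measurable_funM => //.
    apply: (Gmeas_meas _ _ (Fm k)); exact: (Gv k.+1 k hk).
  - by move=> w; exact: expR_ge0.
  - by move=> w; exact: expR_ge0.
  - by move=> w; exact: expR_ge0.
  - apply: Gmeas_exp => //; apply/(GmeasP _ _ (Fs k)); apply: measurable_funB.
    + apply/(GmeasP _ _ (Fs k)); exact: GZ (ltnW kn).
    + apply: measurable_funM => //; apply/(GmeasP _ _ (Fs k)); exact: (Gv k.+1 k hk).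
  - move=> A GA; rewrite -gE //; apply: le_int_signed.
    + exact: Fm GA.
    + apply: measurable_funS (Gmeas_meas _ _ (Fm k) Gg) => //; exact: Fm GA.
    + apply: measurable_funS; [exact: measurableT|by []|].
      apply: (measurableT_comp (@measurable_expR R)); apply: measurable_funM => //.
      apply: (Gmeas_meas _ _ (Fm k)); exact: (Gv k.+1 k hk).
    + by move=> w _; exact: expR_ge0.
    + apply: filterS2 gle vk => w h1 h2 _.
      apply: le_trans h1 _; rewrite /H ler_expR ler_wpM2r //.
      exact: lamic.
  - by under eq_integral do rewrite eq2.
have Gsum (h : nat -> T -> R) : (forall i, (1 <= i <= n)%N -> Gmeasurable (F n) (h i)) ->
    measurable_fun setT (fun w => \sum_(1 <= i < n.+1) h i w).
  move=> hh; apply: (Gmeas_meas _ _ (Fm n)); apply: Gmeas_sum_in => // i.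
  by rewrite mem_index_iota ltnS => hi; apply: hh.
have mS : measurable_fun setT (fun w => \sum_(1 <= i < n.+1) dd i w).
  by apply: Gsum => i hi; apply: Gdd => //; case/andP: hi.
have mAD : measurable_fun setT (fun w => \sum_(1 <= i < n.+1) alpha i * dd i w).
  apply: Gsum => i hi; apply: GmeasM => //; first exact: Gmeas_cst.
  by apply: Gdd => //; case/andP: hi.
have mV : measurable_fun setT (fun w => \sum_(1 <= i < n.+1) v i.-1 w).
  apply: Gsum => i hi; apply: Gv => //; case/andP: hi => _ h; exact: leqW.
set Gs := [set w | (\sum_(1 <= i < n.+1) v i.-1 w
              <= \sum_(1 <= i < n.+1) alpha i * dd i w + Rd)%R].
set Sx := [set w | (\sum_(1 <= i < n.+1) dd i w >= x)%R].
have mGs : measurable Gs.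
  have -> : Gs = (fun w => \sum_(1 <= i < n.+1) alpha i * dd i w + Rd
                          - \sum_(1 <= i < n.+1) v i.-1 w) @^-1` `[0, +oo[.
    by apply/seteqP; split => w /=; rewrite in_itv /= andbT subr_ge0.
  have mf : measurable_fun setT (fun w => \sum_(1 <= i < n.+1) alpha i * dd i w + Rd
                          - \sum_(1 <= i < n.+1) v i.-1 w).
    by apply: measurable_funB => //; apply: measurable_funD.
  rewrite -[X in measurable X]setTI; exact: mf measurableT _ (measurable_itv _).
have mSx : measurable Sx.
  have -> : Sx = (fun w => \sum_(1 <= i < n.+1) dd i w) @^-1` `[x, +oo[.
    by apply/seteqP; split => w /=; rewrite in_itv /= andbT.
  rewrite -[X in measurable X]setTI; exact: mS measurableT _ (measurable_itv _).
set E := Gs `&` Sx.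
have mE : measurable E by exact: measurableI.
set a := lam * x - c * Rd.
have ZE w : E w -> a <= Z n w.
  move=> [/= Gw Sw].
  have -> : Z n w = lam * (\sum_(1 <= i < n.+1) dd i w) +
      c * (\sum_(1 <= i < n.+1) alpha i * dd i w - \sum_(1 <= i < n.+1) v i.-1 w).
    rewrite /Z mulrBr !mulr_sumr -sumrB -big_split /=; apply: eq_bigr => i _.
    rewrite /lami; ring.
  have h1 : lam * x <= lam * (\sum_(1 <= i < n.+1) dd i w) by rewrite ler_wpM2l // ltW.
  have h2 : c * (- Rd) <= c * (\sum_(1 <= i < n.+1) alpha i * dd i w - \sum_(1 <= i < n.+1) v i.-1 w).
    apply: ler_wpM2l; first exact: ltW.
    move: Gw; rewrite /Gs /= => Gw; lra.
  rewrite /a; lra.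
have hE : ((expR a)%:E * P E <= 1)%E.
  apply: le_trans (Mint n (leqnn n)).
  apply: (@le_trans _ _ (\int[P]_(w in E) (expR (Z n w))%:E)%E).
    rewrite -integral_cst //; apply: ge0_le_integral => //.
    - by move=> w _; rewrite /= lee_fin expR_ge0.
    - apply/measurable_EFinP; apply: (measurableT_comp (@measurable_expR R)).
      apply: measurable_funS (Gmeas_meas _ _ (Fm n) (GZ n (leqnn n))) => //.
    - by move=> w Ew; rewrite lee_fin ler_expR ZE.
  apply: ge0_subset_integral => //.
  - apply/measurable_EFinP; apply: (measurableT_comp (@measurable_expR R)).
    exact: (Gmeas_meas _ _ (Fm n) (GZ n (leqnn n))).
have PE : (P E <= (expR (- a))%:E)%E.
  have PEfin : P E \is a fin_num by exact: fin_num_measure.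
  rewrite -(fineK PEfin) in hE *; rewrite -EFinM lee_fin in hE; rewrite lee_fin expRN.
  have pos := expR_gt0 a.
  rewrite -[fine (P E)](mulKf (lt0r_neq0 pos)) -[leRHS]mulr1.
  by rewrite ler_wpM2l // invr_ge0 ltW.
have PGc : (P (~` Gs) <= delta%:E)%E.
  rewrite probability_setC //.
  apply: le_trans (leeB (lexx 1%E) hG) _.
  by rewrite -EFinB lee_fin; lra.
have arith : x ^+ 2 / (4 * Amax * x + 8 * Rd) <= a.
  have e : a - x ^+ 2 / (4 * Amax * x + 8 * Rd) = x ^+ 2 * (2 * Amax * x) / (2 * D ^+ 2).
    rewrite /a /c /lam /D; field.
    apply/andP; split; apply/negP; rewrite gt_eqF //.
    by apply: ltr_wpDl; [rewrite !mulr_ge0 // ltW | rewrite mulr_gt0].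
  rewrite -subr_ge0 e; apply: divr_ge0; last by rewrite mulr_ge0 // ltW // exprn_gt0.
  by rewrite !mulr_ge0 // ltW.
apply: (@le_trans _ _ (P (~` Gs `|` E))).
  apply: le_measure; rewrite ?inE //; first by apply: measurableU => //; exact: measurableC.
  move=> w Sw; have [Gw|nGw] := pselect (Gs w); [by right | by left].
apply: le_trans (measureU2 _ (measurableC mGs) mE) _.
rewrite EFinD; apply: leeD => //; apply: le_trans PE _.
by rewrite lee_fin ler_expR lerN2.
Qed.
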